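(* Let $(X,d)$ be a compact metric space and $f:X\to X$ continuous. Then the relation $\sim$ on $CR(f)$ is an equivalence relation, the set $R=\{(x,y)\in CR(f)^2: x\sim y\}$ is closed in $CR(f)^2$, and $(f\times f)(R)\subset R$.
   Context: For $\delta>0$, a finite sequence $(x_i)_{i=0}^k$ ($k\ge1$) is a $\delta$-chain of $f$ if $d(f(x_i),x_{i+1})\le\delta$ for $0\le i\le k-1$; it is a $\delta$-cycle if moreover $x_0=x_k$. $CR(f)$ is the set of chain recurrent points: $x\in CR(f)$ iff for every $\delta>0$ there is a $\delta$-cycle $(x_i)_{i=0}^k$ with $x_0=x_k=x$. For $x,y\in CR(f)$, $x\sim y$ iff for every $\delta>0$ there are integers $m>0$, $N>0$ such that for every integer $n\ge N$ there are $\delta$-chains $(x_i)_{i=0}^{mn},(y_i)_{i=0}^{mn}$ of $f$ consisting of points of $CR(f)$ with $x_0=y_{mn}=x$ and $x_{mn}=y_0=y$. *)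

(* Defs.v *)
From Stdlib Require Import Reals Lra Lia List.
Open Scope R_scope.

Definition is_metric {X : Type} (d : X -> X -> R) : Prop :=
  (forall x y, 0 <= d x y) /\
  (forall x y, d x y = 0 <-> x = y) /\
  (forall x y, d x y = d y x) /\
  (forall x y z, d x z <= d x y + d y z).

Definition is_open {X : Type} (d : X -> X -> R) (U : X -> Prop) : Prop :=
  forall x, U x -> exists r, 0 < r /\ forall y, d x y < r -> U y.

Definition is_compact {X : Type} (d : X -> X -> R) : Prop :=
  forall (I : Type) (U : I -> X -> Prop),
    (forall i, is_open d (U i)) ->
    (forall x, exists i, U i x) ->
    exists l : list I, forall x, exists i, In i l /\ U i x.

Definition is_continuous {X : Type} (d : X -> X -> R) (f : X -> X) : Prop :=
  forall x eps, 0 < eps -> exists delta, 0 < delta /\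
    forall y, d x y < delta -> d (f x) (f y) < eps.

(* (xs i)_{i=0}^k is a delta-chain of f (the length k >= 1 is required
   separately where chains are used) *)
Definition delta_chain {X : Type} (d : X -> X -> R) (f : X -> X)
    (delta : R) (k : nat) (xs : nat -> X) : Prop :=
  forall i, (i < k)%nat -> d (f (xs i)) (xs (S i)) <= delta.

Definition CR {X : Type} (d : X -> X -> R) (f : X -> X) (x : X) : Prop :=
  forall delta, 0 < delta -> exists (k : nat) (xs : nat -> X),
    (1 <= k)%nat /\ delta_chain d f delta k xs /\ xs 0%nat = x /\ xs k = x.

Definition sim {X : Type} (d : X -> X -> R) (f : X -> X) (x y : X) : Prop :=
  CR d f x /\ CR d f y /\
  forall delta, 0 < delta -> exists m N : nat, (0 < m)%nat /\ (0 < N)%nat /\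
    forall n : nat, (N <= n)%nat ->
      exists xs ys : nat -> X,
        delta_chain d f delta (m * n) xs /\ delta_chain d f delta (m * n) ys /\
        (forall i, (i <= m * n)%nat -> CR d f (xs i)) /\
        (forall i, (i <= m * n)%nat -> CR d f (ys i)) /\
        xs 0%nat = x /\ ys (m * n)%nat = x /\ xs (m * n)%nat = y /\ ys 0%nat = y.

(* Main.v *)
Require Import Defs.
From Stdlib Require Import Reals Lra Lia List Classical IndefiniteDescription.
Open Scope R_scope.

Lemma mzero {X} (d : X -> X -> R) (Hd : is_metric d) x : d x x = 0.
Proof. destruct Hd as [_ [H _]]. apply H; reflexivity. Qed.
Lemma msym {X} (d : X -> X -> R) (Hd : is_metric d) x y : d x y = d y x.
Proof. destruct Hd as [_ [_ [H _]]]. apply H. Qed.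
Lemma mtri {X} (d : X -> X -> R) (Hd : is_metric d) x y z : d x z <= d x y + d y z.
Proof. destruct Hd as [_ [_ [_ H]]]. apply H. Qed.
Lemma mpos {X} (d : X -> X -> R) (Hd : is_metric d) x y : 0 <= d x y.
Proof. destruct Hd as [H _]. apply H. Qed.

Lemma chain_mono {X} d f (e1 e2 : R) k (xs : nat -> X) :
  e1 <= e2 -> delta_chain d f e1 k xs -> delta_chain d f e2 k xs.
Proof. intros H Hc i Hi. specialize (Hc i Hi). lra. Qed.

Definition cat {X} (k1 : nat) (a b : nat -> X) : nat -> X :=
  fun i => if Nat.leb i k1 then a i else b (i - k1)%nat.

Lemma cat_l {X} k1 (a b : nat -> X) i : (i <= k1)%nat -> cat k1 a b i = a i.
Proof. intros H; unfold cat. destruct (Nat.leb_spec i k1); [reflexivity | lia]. Qed.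
Lemma cat_r {X} k1 (a b : nat -> X) i : (k1 < i)%nat -> cat k1 a b i = b (i - k1)%nat.
Proof. intros H; unfold cat. destruct (Nat.leb_spec i k1); [lia | reflexivity]. Qed.

Lemma cat_chain {X} d f e k1 k2 (a b : nat -> X) :
  delta_chain d f e k1 a -> delta_chain d f e k2 b -> a k1 = b 0%nat ->
  delta_chain d f e (k1 + k2) (cat k1 a b).
Proof.
  intros Ha Hb Hab i Hi. unfold cat.
  destruct (Nat.leb_spec i k1); destruct (Nat.leb_spec (S i) k1).
  - apply Ha; lia.
  - assert (i = k1) by lia. subst i. replace (S k1 - k1)%nat with 1%nat by lia.
    rewrite Hab. apply (Hb 0%nat). lia.
  - lia.
  - replace (S i - k1)%nat with (S (i - k1)) by lia. apply Hb. lia.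
Qed.

Lemma cat_end {X} k1 k2 (a b : nat -> X) : a k1 = b 0%nat -> cat k1 a b (k1 + k2)%nat = b k2.
Proof.
  intros H. unfold cat. destruct (Nat.leb_spec (k1 + k2) k1).
  - assert (k2 = 0%nat) by lia. subst. rewrite Nat.add_0_r. exact H.
  - f_equal. lia.
Qed.

Definition gchain {X} d f e k (xs : nat -> X) a b :=
  delta_chain d f e k xs /\ (forall i, (i <= k)%nat -> CR d f (xs i)) /\ xs 0%nat = a /\ xs k = b.

Lemma gchain_cat {X} d f e k1 k2 (xa xb : nat -> X) a b c :
  gchain d f e k1 xa a b -> gchain d f e k2 xb b c -> gchain d f e (k1+k2) (cat k1 xa xb) a c.
Proof.
  intros [H1 [C1 [A1 B1]]] [H2 [C2 [A2 B2]]]. split; [|split; [|split]].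
  - apply cat_chain; auto; congruence.
  - intros i Hi. destruct (Nat.le_gt_cases i k1).
    + rewrite cat_l by lia. auto.
    + rewrite cat_r by lia. apply C2. lia.
  - rewrite cat_l by lia. auto.
  - rewrite cat_end by congruence. auto.
Qed.

Lemma gchain_mono {X} d f e1 e2 k (xs : nat -> X) a b :
  e1 <= e2 -> gchain d f e1 k xs a b -> gchain d f e2 k xs a b.
Proof. intros H [H1 H2]. split; auto. eapply chain_mono; eauto. Qed.

Definition sim2 {X} d f (x y : X) := CR d f x /\ CR d f y /\
  forall delta, 0 < delta -> exists m N : nat, (0 < m)%nat /\ (0 < N)%nat /\
   forall n, (N <= n)%nat -> (exists xs, gchain d f delta (m*n) xs x y) /\
                             (exists ys, gchain d f delta (m*n) ys y x).

Lemma sim_iff {X} d f (x y : X) : sim d f x y <-> sim2 d f x y.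
Proof.
  split.
  - intros [Hx [Hy H]]. split; [auto|split; [auto|]]. intros e He.
    destruct (H e He) as [m [N [Hm [HN H']]]]. exists m, N. split; [auto|split;[auto|]].
    intros n Hn. destruct (H' n Hn) as [xs [ys [A [B [C [D [E [F [G K]]]]]]]]].
    split; [exists xs | exists ys]; repeat split; auto.
  - intros [Hx [Hy H]]. split; [auto|split; [auto|]]. intros e He.
    destruct (H e He) as [m [N [Hm [HN H']]]]. exists m, N. split; [auto|split;[auto|]].
    intros n Hn. destruct (H' n Hn) as [[xs [A [C [E G]]]] [ys [B [D [F K]]]]].
    exists xs, ys. repeat split; auto.
Qed.

Definition repl {X} k (a b : X) (xs : nat -> X) :=
  fun i => if Nat.eqb i 0 then a else if Nat.eqb i k then b else xs i.

Lemma repl_0 {X} k (a b : X) xs : repl k a b xs 0%nat = a.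
Proof. reflexivity. Qed.
Lemma repl_k {X} k (a b : X) xs : (1 <= k)%nat -> repl k a b xs k = b.
Proof. intros H. unfold repl. destruct (Nat.eqb_spec k 0); [lia|]. rewrite Nat.eqb_refl. auto. Qed.

Lemma ends_replace {X} d f (Hd : is_metric d) e1 e e2 k (xs : nat -> X) a b :
  (1 <= k)%nat -> delta_chain d f e k xs -> d (f a) (f (xs 0%nat)) <= e1 -> d (xs k) b <= e2 ->
  delta_chain d f (e1 + e + e2) k (repl k a b xs).
Proof.
  intros Hk Hc H1 H2 i Hi.
  assert (P1 : 0 <= e1) by (pose proof (mpos d Hd (f a) (f (xs 0%nat))); lra).
  assert (P2 : 0 <= e2) by (pose proof (mpos d Hd (xs k) b); lra).
  assert (Hfst: d (f (repl k a b xs i)) (f (xs i)) <= e1).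
  { unfold repl. destruct (Nat.eqb_spec i 0). subst; exact H1. destruct (Nat.eqb_spec i k). lia.
    rewrite mzero by auto. lra. }
  assert (Hsnd: d (xs (S i)) (repl k a b xs (S i)) <= e2).
  { unfold repl. destruct (Nat.eqb_spec (S i) 0). lia. destruct (Nat.eqb_spec (S i) k).
    rewrite e0; exact H2. rewrite mzero by auto. lra. }
  pose proof (Hc i Hi).
  pose proof (mtri d Hd (f (repl k a b xs i)) (f (xs i)) (repl k a b xs (S i))).
  pose proof (mtri d Hd (f (xs i)) (xs (S i)) (repl k a b xs (S i))).
  lra.
Qed.

Lemma gchain_repl {X} d f (Hd : is_metric d) e1 e e2 k (xs : nat -> X) a b a' b' :
  gchain d f e k xs a' b' -> (1 <= k)%nat -> CR d f a -> CR d f b ->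
  d (f a) (f a') <= e1 -> d b' b <= e2 -> gchain d f (e1+e+e2) k (repl k a b xs) a b.
Proof.
  intros [Hc [HC [H0 Hk']]] Hk Ha Hb H1 H2. split; [|split;[|split]].
  - apply ends_replace; auto; congruence.
  - intros i Hi. unfold repl. destruct (Nat.eqb_spec i 0); auto. destruct (Nat.eqb_spec i k); auto.
  - apply repl_0.
  - apply repl_k; auto.
Qed.
Definition chainfrom {X} d f e (a b : X) := exists k xs,
  (1 <= k)%nat /\ delta_chain d f e k xs /\ xs 0%nat = a /\ xs k = b.

Lemma chainfrom_mono {X} d f e1 e2 (a b : X) : e1 <= e2 -> chainfrom d f e1 a b -> chainfrom d f e2 a b.
Proof. intros H [k [xs [A [B C]]]]. exists k, xs. split; auto. split; auto. eapply chain_mono; eauto. Qed.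

Lemma chainfrom_cat {X} d f e (a b c : X) : chainfrom d f e a b -> chainfrom d f e b c -> chainfrom d f e a c.
Proof.
  intros [k1 [xa [A1 [B1 [C1 D1]]]]] [k2 [xb [A2 [B2 [C2 D2]]]]].
  exists (k1 + k2)%nat, (cat k1 xa xb). split; [lia|split;[|split]].
  - apply cat_chain; auto; congruence.
  - rewrite cat_l by lia. auto.
  - rewrite cat_end by congruence. auto.
Qed.

Lemma chainfrom_prefix {X} d f e k (xs : nat -> X) i :
  delta_chain d f e k xs -> (1 <= i <= k)%nat -> chainfrom d f e (xs 0%nat) (xs i).
Proof. intros H Hi. exists i, xs. repeat split; try lia; auto. intros j Hj. apply H. lia. Qed.

Lemma chainfrom_suffix {X} d f e k (xs : nat -> X) i :
  delta_chain d f e k xs -> (i < k)%nat -> chainfrom d f e (xs i) (xs k).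
Proof.
  intros H Hi. exists (k - i)%nat, (fun j => xs (i + j)%nat). split; [lia|split;[|split]].
  - intros j Hj. replace (i + S j)%nat with (S (i + j)) by lia. apply H. lia.
  - f_equal. lia.
  - f_equal. lia.
Qed.

Lemma CR_chainfrom {X} d f (z : X) : CR d f z <-> forall e, 0 < e -> chainfrom d f e z z.
Proof. reflexivity. Qed.

Definition shift {X} (f : X -> X) k (a : X) (xs : nat -> X) :=
  fun i => if Nat.eqb i 0 then f a else if Nat.ltb i k then xs (S i) else f (xs k).

Lemma shift_chain {X} d f (Hd : is_metric d) (Hf : is_continuous d f) (a : X) delta :
  0 < delta -> exists d', 0 < d' /\ d' <= delta /\ forall k xs, (1<=k)%nat ->
   delta_chain d f d' k xs -> xs 0%nat = a -> delta_chain d f delta k (shift f k a xs).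
Proof.
  intros Hdel. destruct (Hf (f a) (delta/2)) as [eta [Heta Hc]]; [lra|].
  exists (Rmin (eta/2) (delta/2)). pose proof (Rmin_l (eta/2) (delta/2)).
  pose proof (Rmin_r (eta/2) (delta/2)).
  split; [apply Rmin_pos; lra|split; [lra|]].
  intros k xs Hk Hch Hx0 i Hi. unfold shift.
  destruct (Nat.eqb_spec i 0).
  - subst i. destruct (Nat.eqb_spec 1 0); [lia|].
    assert (A : d (f (f a)) (f (xs 1%nat)) < delta/2).
    { apply Hc. pose proof (Hch 0%nat Hk). rewrite Hx0 in H1. lra. }
    assert (B : d (f (xs 1%nat)) (if Nat.ltb 1 k then xs 2%nat else f (xs k)) <= Rmin (eta/2) (delta/2)).
    { destruct (Nat.ltb_spec 1 k). apply Hch; lia. replace k with 1%nat by lia.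
      rewrite mzero by auto. left; apply Rmin_pos; lra. }
    pose proof (mtri d Hd (f (f a)) (f (xs 1%nat)) (if Nat.ltb 1 k then xs 2%nat else f (xs k))).
    lra.
  - destruct (Nat.ltb_spec i k); [|lia]. destruct (Nat.eqb_spec (S i) 0); [lia|].
    destruct (Nat.ltb_spec (S i) k).
    + pose proof (Hch (S i) H2). lra.
    + replace k with (S i) by lia. rewrite mzero by auto. lra.
Qed.

Lemma shift_0 {X} (f : X -> X) k a xs : shift f k a xs 0%nat = f a.
Proof. reflexivity. Qed.
Lemma shift_k {X} (f : X -> X) k a xs : (1 <= k)%nat -> shift f k a xs k = f (xs k).
Proof. intros H. unfold shift. destruct (Nat.eqb_spec k 0); [lia|]. rewrite Nat.ltb_irrefl. auto. Qed.

Lemma CR_f {X} d f (Hd : is_metric d) (Hf : is_continuous d f) (a : X) : CR d f a -> CR d f (f a).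
Proof.
  intros Ha e He. destruct (shift_chain d f Hd Hf a e He) as [d' [Hd' [Hle Hs]]].
  destruct (Ha d' Hd') as [k [xs [Hk [Hc [H0 Hk']]]]].
  exists k, (shift f k a xs). split; auto. split; [apply Hs; auto|].
  split; [apply shift_0|]. rewrite shift_k by auto. congruence.
Qed.

Lemma gchain_shift {X} d f (Hd : is_metric d) (Hf : is_continuous d f) (a : X) delta d' k xs b :
  (forall k xs, (1<=k)%nat -> delta_chain d f d' k xs -> xs 0%nat = a -> delta_chain d f delta k (shift f k a xs)) ->
  (1 <= k)%nat -> gchain d f d' k xs a b -> gchain d f delta k (shift f k a xs) (f a) (f b).
Proof.
  intros Hs Hk [Hc [HC [H0 Hk']]]. split; [apply Hs; auto|split;[|split]].
  - intros i Hi. unfold shift. destruct (Nat.eqb_spec i 0).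
    + apply CR_f; auto. rewrite <- H0. apply HC. lia.
    + destruct (Nat.ltb_spec i k). apply HC; lia. apply CR_f; auto.
  - apply shift_0.
  - rewrite shift_k by auto. congruence.
Qed.
Definition Cx {X} d f (x z : X) := forall e, 0 < e -> chainfrom d f e x z /\ chainfrom d f e z x.
Definition link {X} d f (x : X) e w := chainfrom d f e x w /\ chainfrom d f e w x.
Definition goodp {X} d f (x : X) delta (p : X * R) := 0 < snd p /\
  ((forall w, d (fst p) w < snd p -> ~ link d f x (snd p) w) \/
   (Cx d f x (fst p) /\ forall y, d (fst p) y < snd p -> d (f (fst p)) (f y) < delta/3 /\ d (fst p) y < delta/3)).

Lemma Cx_CR {X} d f (x z : X) : Cx d f x z -> CR d f z.
Proof. intros H e He. destruct (H e He). eapply chainfrom_cat; eauto. Qed.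

Lemma fold_min {A} (g : A -> R) (l : list A) (c : R) :
  0 < c -> (forall a, 0 < g a) ->
  0 < fold_right (fun a acc => Rmin (g a) acc) c l /\ fold_right (fun a acc => Rmin (g a) acc) c l <= c /\
  forall a, In a l -> fold_right (fun a acc => Rmin (g a) acc) c l <= g a.
Proof.
  intros Hc Hg. induction l as [|b l IH]; simpl.
  - split; auto. split; [lra| intros a []].
  - destruct IH as [A1 [A2 A3]]. pose proof (Rmin_l (g b) (fold_right (fun a acc => Rmin (g a) acc) c l)).
    pose proof (Rmin_r (g b) (fold_right (fun a acc => Rmin (g a) acc) c l)).
    split; [apply Rmin_pos; auto|split; [lra|]].
    intros a [->|Ha]; [lra|]. specialize (A3 a Ha). lra.
Qed.

Lemma choice_nat {X} (P : nat -> X -> Prop) : (forall i, exists z, P i z) -> exists g, forall i, P i (g i).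
Proof.
  intros H. exists (fun i => proj1_sig (constructive_indefinite_description _ (H i))).
  intros i. exact (proj2_sig (constructive_indefinite_description _ (H i))).
Qed.

Lemma CR_cycle_in_CR {X} d f (Hd : is_metric d) (Hcpt : is_compact d) (Hf : is_continuous d f) (x : X) :
  CR d f x -> forall delta, 0 < delta -> exists k cs, (1 <= k)%nat /\ gchain d f delta k cs x x.
Proof.
  intros Hx delta Hdel.
  assert (HCx : Cx d f x x). { intros e He. split; apply (Hx e He). }
  pose (I := {p : X * R | goodp d f x delta p}).
  pose (U := fun (i : I) w => d (fst (proj1_sig i)) w < snd (proj1_sig i)).
  assert (Hopen : forall i, is_open d (U i)).
  { intros i w Hw. unfold U in *. exists (snd (proj1_sig i) - d (fst (proj1_sig i)) w).
    split; [lra|]. intros y Hy. pose proof (mtri d Hd (fst (proj1_sig i)) w y). lra. }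
  assert (Hcov : forall w, exists i, U i w).
  { intros w. destruct (classic (Cx d f x w)) as [HC|HnC].
    - destruct (Hf w (delta/3)) as [eta [Heta Hc]]; [lra|].
      pose proof (Rmin_l eta (delta/3)). pose proof (Rmin_r eta (delta/3)).
      assert (G: goodp d f x delta (w, Rmin eta (delta/3))).
      { split; [simpl; apply Rmin_pos; lra|]. right. split; auto. simpl. intros y Hy.
        split; [apply Hc; lra | lra]. }
      exists (exist _ (w, Rmin eta (delta/3)) G). unfold U; simpl. rewrite mzero by auto.
      apply Rmin_pos; lra.
    - unfold Cx in HnC. apply not_all_ex_not in HnC. destruct HnC as [e He].
      apply imply_to_and in He. destruct He as [He HnAB]. apply not_and_or in HnAB.
      destruct HnAB as [HnA|HnB].
      + assert (G: goodp d f x delta (w, e/2)).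
        { split; [simpl; lra|]. left. simpl. intros w' Hw' [HA' _]. apply HnA.
          destruct HA' as [k [xs [Hk [Hc [Hz0 Hk']]]]].
          exists k, (repl k x w xs). split; auto. split; [|split; [apply repl_0| apply repl_k; auto]].
          apply chain_mono with (e1 := 0 + e/2 + e/2); [lra|].
          apply ends_replace; auto.
          - rewrite Hz0, mzero by auto. lra.
          - rewrite Hk', msym by auto. lra. }
        exists (exist _ (w, e/2) G). unfold U; simpl. rewrite mzero by auto. lra.
      + destruct (Hf w (e/2)) as [eta [Heta Hc]]; [lra|].
        pose proof (Rmin_l eta (e/2)). pose proof (Rmin_r eta (e/2)).
        assert (G: goodp d f x delta (w, Rmin eta (e/2))).
        { split; [simpl; apply Rmin_pos; lra|]. left. simpl. intros w' Hw' [_ HB']. apply HnB.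
          destruct HB' as [k [xs [Hk [Hch [Hz0 Hk']]]]].
          exists k, (repl k w x xs). split; auto. split; [|split; [apply repl_0| apply repl_k; auto]].
          apply chain_mono with (e1 := e/2 + Rmin eta (e/2) + 0); [lra|].
          apply ends_replace; auto.
          - rewrite Hz0. left. apply Hc. lra.
          - rewrite Hk', mzero by auto. lra. }
        exists (exist _ (w, Rmin eta (e/2)) G). unfold U; simpl. rewrite mzero by auto.
        apply Rmin_pos; lra. }
  destruct (Hcpt I U Hopen Hcov) as [l Hl].
  pose (g := fun i : I => snd (proj1_sig i)).
  assert (Hg : forall i, 0 < g i). { intros i. destruct (proj2_sig i) as [Hp _]. exact Hp. }
  destruct (fold_min g l (delta/3)) as [E1 [E2 E3]]; [lra|exact Hg|].
  set (eps0 := fold_right (fun a acc => Rmin (g a) acc) (delta / 3) l) in *.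
  destruct (Hx eps0 E1) as [k [xs [Hk [Hc [H0 Hkx]]]]].
  assert (Hlink : forall i, (i <= k)%nat -> link d f x eps0 (xs i)).
  { intros i Hi.
    assert (Hcyc : chainfrom d f eps0 x x) by (exists k, xs; auto).
    destruct (Nat.eq_dec i 0) as [->|Hi0]; [rewrite H0; split; auto|].
    destruct (Nat.eq_dec i k) as [->|Hik]; [rewrite Hkx; split; auto|].
    split.
    - rewrite <- H0. apply chainfrom_prefix with (k := k); auto. lia.
    - rewrite <- Hkx. apply chainfrom_suffix; auto. lia. }
  assert (Hpick : forall i, exists z, (i <= k)%nat -> Cx d f x z /\
            d (f z) (f (xs i)) < delta/3 /\ d z (xs i) < delta/3).
  { intros i. destruct (Compare_dec.le_lt_dec i k) as [Hi|Hi].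
    - destruct (Hl (xs i)) as [j [Hj HU]]. pose proof (E3 j Hj) as Hle.
      unfold U, g in *. destruct j as [[z r] [Hr Hgd]]. simpl in *.
      destruct Hgd as [Hgd|[HCz Hcz]].
      + exfalso. apply (Hgd (xs i) HU). destruct (Hlink i Hi) as [L1 L2].
        split; eapply chainfrom_mono; eauto.
      + exists z. intros _. split; auto.
    - exists x. intros; lia. }
  destruct (choice_nat _ Hpick) as [gz Hgz].
  exists k, (repl k x x gz). split; auto.
  assert (Hcp : forall i, (i <= k)%nat -> Cx d f x (repl k x x gz i) /\
     d (f (repl k x x gz i)) (f (xs i)) <= delta/3 /\ d (repl k x x gz i) (xs i) <= delta/3).
  { intros i Hi. unfold repl. destruct (Nat.eqb_spec i 0).
    - subst i. rewrite H0, !mzero by auto. split; [exact HCx|split; lra].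
    - destruct (Nat.eqb_spec i k).
      + subst i. rewrite Hkx, !mzero by auto. split; [exact HCx|split; lra].
      + destruct (Hgz i Hi) as [A [B C]]. split; [exact A|split; lra]. }
  split; [|split; [|split; [apply repl_0|apply repl_k; auto]]].
  - intros i Hi. destruct (Hcp i (Nat.lt_le_incl _ _ Hi)) as [_ [A _]].
    destruct (Hcp (S i) Hi) as [_ [_ B]]. pose proof (Hc i Hi).
    rewrite msym in B by auto.
    pose proof (mtri d Hd (f (repl k x x gz i)) (f (xs i)) (repl k x x gz (S i))).
    pose proof (mtri d Hd (f (xs i)) (xs (S i)) (repl k x x gz (S i))).
    lra.
  - intros i Hi. eapply Cx_CR. apply (Hcp i Hi).
Qed.
Lemma gchain_pow {X} d f e k (cs : nat -> X) x :
  gchain d f e k cs x x -> forall n, exists ys, gchain d f e (k*n) ys x x.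
Proof.
  intros Hc n. induction n as [|n [ys IH]].
  - rewrite Nat.mul_0_r. exists (fun _ => x). destruct Hc as [_ [HC [H0 _]]].
    split; [intros i Hi; lia|split; [|split; reflexivity]].
    intros i _. rewrite <- H0. apply HC. lia.
  - rewrite Nat.mul_succ_r. eexists. eapply gchain_cat; eauto.
Qed.

Theorem lemma3p1 (X : Type) (d : X -> X -> R) (f : X -> X)
  (Hd : is_metric d) (Hcpt : is_compact d) (Hf : is_continuous d f) :
  (* ~ is an equivalence relation on CR(f) *)
  ((forall x, CR d f x -> sim d f x x) /\
   (forall x y, sim d f x y -> sim d f y x) /\
   (forall x y z, sim d f x y -> sim d f y z -> sim d f x z)) /\
  (* R is closed in CR(f)^2 (contains all its limit points in CR(f)^2,
     product topology given by the max metric) *)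
  (forall x y, CR d f x -> CR d f y ->
     (forall eps, 0 < eps -> exists x' y', sim d f x' y' /\ d x x' < eps /\ d y y' < eps) ->
     sim d f x y) /\
  (* (f x f)(R) is contained in R *)
  (forall x y, sim d f x y -> sim d f (f x) (f y)).
Proof.
  split; [split; [|split]|split].
  - intros x Hx. apply sim_iff. split; [auto|split; [auto|]]. intros e He.
    destruct (CR_cycle_in_CR d f Hd Hcpt Hf x Hx e He) as [k [cs [Hk Hc]]].
    exists k, 1%nat. split; [lia|split; [lia|]]. intros n _.
    destruct (gchain_pow d f e k cs x Hc n) as [ys Hys]. split; eauto.
  - intros x y H. apply sim_iff in H. apply sim_iff.
    destruct H as [Hx [Hy H]]. split; [auto|split; [auto|]]. intros e He.
    destruct (H e He) as [m [N [Hm [HN H']]]]. exists m, N. split; [auto|split; [auto|]].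
    intros n Hn. destruct (H' n Hn). split; auto.
  - intros x y z H1 H2. apply sim_iff in H1, H2. apply sim_iff.
    destruct H1 as [Hx [Hy H1]]. destruct H2 as [_ [Hz H2]].
    split; [auto|split; [auto|]]. intros e He.
    destruct (H1 e He) as [m1 [N1 [Hm1 [HN1 H1']]]].
    destruct (H2 e He) as [m2 [N2 [Hm2 [HN2 H2']]]].
    exists (m1*m2 + m2*m1)%nat, (N1 + N2)%nat. split; [nia|split; [lia|]].
    intros n Hn.
    destruct (H1' (m2*n)%nat) as [[xs1 A1] [ys1 B1]]; [nia|].
    destruct (H2' (m1*n)%nat) as [[xs2 A2] [ys2 B2]]; [nia|].
    replace ((m1*m2 + m2*m1)*n)%nat with (m1*(m2*n) + m2*(m1*n))%nat by ring.
    split; [eexists; eapply gchain_cat; eauto|].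
    replace (m1*(m2*n) + m2*(m1*n))%nat with (m2*(m1*n) + m1*(m2*n))%nat by ring.
    eexists; eapply gchain_cat; eauto.
  - intros x y Hx Hy Happ. apply sim_iff. split; [auto|split; [auto|]]. intros e He.
    destruct (Hf x (e/3)) as [eta1 [Heta1 Hc1]]; [lra|].
    destruct (Hf y (e/3)) as [eta2 [Heta2 Hc2]]; [lra|].
    pose (eps := Rmin eta1 (Rmin eta2 (e/3))).
    assert (Ep : 0 < eps) by (apply Rmin_pos; [lra|apply Rmin_pos; lra]).
    assert (E1 : eps <= eta1) by apply Rmin_l.
    assert (E2 : eps <= eta2) by (eapply Rle_trans; [apply Rmin_r|apply Rmin_l]).
    assert (E3 : eps <= e/3) by (eapply Rle_trans; [apply Rmin_r|apply Rmin_r]).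
    destruct (Happ eps Ep) as [x' [y' [Hs [Dx Dy]]]].
    apply sim_iff in Hs. destruct Hs as [_ [_ Hs]].
    destruct (Hs (e/3)) as [m [N [Hm [HN H']]]]; [lra|].
    exists m, N. split; [auto|split; [auto|]]. intros n Hn.
    destruct (H' n Hn) as [[xs A] [ys B]].
    assert (Hk : (1 <= m*n)%nat) by nia.
    split.
    + exists (repl (m*n) x y xs). eapply gchain_mono; [|eapply gchain_repl with (e1 := e/3) (e2 := e/3); eauto].
      * lra.
      * left. apply Hc1. lra.
      * rewrite msym by auto. lra.
    + exists (repl (m*n) y x ys). eapply gchain_mono; [|eapply gchain_repl with (e1 := e/3) (e2 := e/3); eauto].
      * lra.
      * left. apply Hc2. lra.
      * rewrite msym by auto. lra.
  - intros x y H. apply sim_iff in H. apply sim_iff.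
    destruct H as [Hx [Hy H]]. split; [apply CR_f; auto|split; [apply CR_f; auto|]].
    intros e He.
    destruct (shift_chain d f Hd Hf x e He) as [d1 [Hd1 [_ S1]]].
    destruct (shift_chain d f Hd Hf y e He) as [d2 [Hd2 [_ S2]]].
    destruct (H (Rmin d1 d2)) as [m [N [Hm [HN H']]]]; [apply Rmin_pos; auto|].
    exists m, N. split; [auto|split; [auto|]]. intros n Hn.
    destruct (H' n Hn) as [[xs A] [ys B]].
    assert (Hk : (1 <= m*n)%nat) by nia.
    split; eexists; eapply gchain_shift; eauto; eapply gchain_mono; eauto.
    + apply Rmin_l.
    + apply Rmin_r.
Qed.
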